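(* Let $C$ be a complex scheme. If $C$ has odd type, then $$\Delta=-4\big(l+2(\Pi^--\Pi^+)+(\Lambda^--\Lambda^+)\big).$$ If $C$ has even type, then $$\Delta=-4\big(l+2(\Pi^--\Pi^+)\big).$$
   Context: A complex scheme $C$ in $\mathbb{R}P^2$ is a finite collection of disjoint smooth simple closed curves, up to isotopy, at most one of which is one-sided. The two-sided components are ovals, and $C$ carries a semi-orientation (orientations of all components up to simultaneous reversal). $C$ has odd type if it has a one-sided component $J$ and even type otherwise; in the even case an auxiliary oriented one-sided curve $J$ disjoint from the ovals is fixed. Numerical characteristics: - $l$ is the number of ovals. - Regions are the components of $\mathbb{R}P^2\setminus(C\cup J)$, and the outer region $R_1$ is the one whose closure meets $J$. The parity $\mathrm{par}$ of a region or oval is the parity of the number of ovals crossed to reach $R_1$. - For an oval $o$ bounding a disk $D_o$ and $x\in\mathrm{int}D_o$, one has $[o]=\pm2[J]$ in $H_1(\mathbb{R}P^2\setminus\{x\})$; $o$ is negative if $[o]=2[J]$, positive otherwise, and $\epsilon(o)=\pm1$ accordingly. $\Lambda^+$ and $\Lambda^-$ are the numbers of positive and negative ovals. - Two ovals form an injective pair if they bound an annulus in $\mathbb{R}P^2$. The pair is positive if their orientations are the boundary orientation induced by an orientation of that annulus, and negative otherwise. $\Pi^\pm$ is the number of positive/negative injective pairs. $\Gamma=\Gamma(C)$ is the weighted tree with vertices $R$ (weight $2\chi(R)$) for each region, $o$ (weight $0$) for each oval, and $u_1,u_2,u_3$ (weights $1,2,2$). Its edges are $Ro$ for $o\subset\partial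 R$, and $u_1u_2$, $u_1u_3$, $u_1R_1$. $A_\Gamma$ is the matrix with the weights on the diagonal and $1$ for adjacent vertices, $0$ otherwise. $\vec s$ is the vector indexed by vertices with the following entries: - $\vec s_{u_2}=1$ if $C$ has odd type and $0$ otherwise; - $\vec s_o=(-1)^{\mathrm{par}(o)+1}\epsilon(o)$ for each oval $o$; - $0$ at all other vertices. Finally $\Delta=2\vec sA_\Gamma^{-1}\vec s^{\,t}$. *)

(* Defs.v *)
From HB Require Import structures.
From mathcomp Require Import all_boot all_order all_algebra.
Set Implicit Arguments. Unset Strict Implicit. Unset Printing Implicit Defensive.
Import Order.TTheory GRing.Theory Num.Theory.
Local Open Scope ring_scope.

(* A complex scheme C with l ovals (indexed by 'I_l) is encoded by          *)
(*  - parent : 'I_l -> option 'I_l : the oval immediately enclosing o       *)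
(*    (o lies on the boundary of the region R_(parent o) inside that oval), *)
(*    or None if o is outermost (o lies on the boundary of R_1);            *)
(*  - pos : 'I_l -> bool : pos o = true iff o is positive (epsilon(o)=1),   *)
(*    false iff o is negative ([o] = 2[J]);                                 *)
(*  - oddt : bool : whether C has odd type.                                 *)

Section Scheme.
Variables (l : nat) (parent : 'I_l -> option 'I_l) (pos : 'I_l -> bool)
          (oddt : bool).

Definition pstep (o : option 'I_l) : option 'I_l :=
  if o is Some i then parent i else None.

(* the nesting relation is a forest (no cycles) *)
Definition scheme_acyclic : Prop :=
  forall i : 'I_l, iter l pstep (Some i) = None.

(* j is an oval enclosing i (j <> i), i.e. i lies in the disk D_j *)
Definition encloses (j i : 'I_l) : bool :=
  [exists k : 'I_l, iter k.+1 pstep (Some i) == Some j].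

(* number of ovals crossed to reach R_1 from the oval i *)
Definition depth (i : 'I_l) : nat := #|[pred j | encloses j i]|.

Definition par (i : 'I_l) : nat := (depth i %% 2)%N.

Definition eps (i : 'I_l) : rat := if pos i then 1 else -1.

Definition Lambda_plus : nat := #|[pred i | pos i]|.
Definition Lambda_minus : nat := #|[pred i | ~~ pos i]|.

(* injective pairs = nested pairs (inner, outer); positive iff the two
   ovals have opposite signs epsilon *)
Definition Pi_plus : nat :=
  #|[pred p : 'I_l * 'I_l | encloses p.2 p.1 && (pos p.1 != pos p.2)]|.
Definition Pi_minus : nat :=
  #|[pred p : 'I_l * 'I_l | encloses p.2 p.1 && (pos p.1 == pos p.2)]|.

(* number of ovals lying on the boundary of R_1, resp. of R_o (o's children) *)
Definition nroots : nat := #|[pred j | parent j == None]|.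
Definition nchildren (i : 'I_l) : nat := #|[pred j | parent j == Some i]|.

(* Euler characteristics of the regions: R_1 is the open disk RP^2 \ J
   minus nroots closed disks; R_o is the open disk int D_o minus
   nchildren o closed disks. *)
Definition chi_R1 : int := 1 - (nroots%:Z).
Definition chi_Rin (i : 'I_l) : int := 1 - (nchildren i)%:Z.

Inductive vtx := U1 | U2 | U3 | Rout | Ov of 'I_l | Rin of 'I_l.

(* numbering of the 4 + l + l vertices:
   0 = u1, 1 = u2, 2 = u3, 3 = R_1, 4+i = oval i, 4+l+i = region R_i *)
Definition nV : nat := (4 + l + l)%N.

Definition decode (v : nat) : vtx :=
  match v with
  | 0 => U1 | 1 => U2 | 2 => U3 | 3 => Rout
  | _ => match (insub (v - 4)%N : option 'I_l) with
         | Some i => Ov i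
         | None => match (insub (v - 4 - l)%N : option 'I_l) with
                   | Some i => Rin i
                   | None => Rout
                   end
         end
  end.

Definition weight (x : vtx) : rat :=
  match x with
  | U1 => 1 | U2 => 2 | U3 => 2
  | Rout => 2 * (chi_R1%:~R)
  | Ov _ => 0
  | Rin i => 2 * ((chi_Rin i)%:~R)
  end.

Definition edge (x y : vtx) : bool :=
  match x, y with
  | U1, U2 | U1, U3 | U1, Rout => true
  | Ov i, Rin j => (i == j) || (parent i == Some j)
  | Ov i, Rout => parent i == None
  | _, _ => false
  end.

Definition adj (x y : vtx) : bool := edge x y || edge y x.

Definition A_Gamma : 'M[rat]_nV :=
  \matrix_(a < nV, b < nV)
    if a == b then weight (decode a) else (adj (decode a) (decode b))%:R.

Definition svec_entry (x : vtx) : rat :=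
  match x with
  | U2 => if oddt then 1 else 0
  | Ov i => (-1) ^+ (par i).+1 * eps i
  | _ => 0
  end.

Definition s_Gamma : 'rV[rat]_nV := \row_(a < nV) svec_entry (decode a).

Definition Delta : rat := 2 * (s_Gamma *m invmx A_Gamma *m s_Gamma^T) 0 0.

End Scheme.

(* Main.v *)
Require Import Defs.
From HB Require Import structures.
From mathcomp Require Import all_boot all_order all_algebra.
Import Order.TTheory GRing.Theory Num.Theory.
From mathcomp Require Import zify ring lra.
Set Implicit Arguments. Unset Strict Implicit. Unset Printing Implicit Defensive.
Local Open Scope ring_scope.



Section Tree.
Variables (l : nat) (parent : 'I_l -> option 'I_l).
Hypothesis Hac : scheme_acyclic parent.

Local Notation E := (encloses parent).
Local Notation ps := (pstep parent).

Lemma iter_None n : iter n ps None = None.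
Proof. by elim: n => //= n ->. Qed.

Lemma iter_bound n i : iter n ps (Some i) <> None -> (n < l)%N.
Proof.
move=> H; rewrite ltnNge; apply/negP => Hle; apply: H.
by rewrite -(subnK Hle) iterD Hac iter_None.
Qed.

Lemma E_parent j i : E j i =
  if parent i is Some p then (p == j) || E j p else false.
Proof.
rewrite /encloses; case Hp: (parent i) => [p|].
- apply/existsP/idP.
  + case=> k; rewrite iterSr /= Hp; case: k => [[|k] Hk] /=; first by move=> /eqP [] ->; rewrite eqxx.
    move=> Hs; apply/orP; right; apply/existsP.
    by exists (Ordinal (ltnW Hk)).
  + have l0 : (0 < l)%N by apply: leq_ltn_trans (ltn_ord i).
    case/orP => [/eqP <-|/existsP [k Hk]].
    * by exists (Ordinal l0); rewrite /= Hp.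
    * have Hk2 : (k.+2 < l)%N.
        apply: (@iter_bound _ i); rewrite iterSr /= Hp; move: Hk => /= /eqP ->; done.
      by exists (Ordinal (ltnW Hk2)); rewrite iterSr /= Hp.
- apply/existsP => [[k]]; by rewrite iterSr /= Hp iter_None.
Qed.

Lemma E_irr i : ~~ E i i.
Proof.
apply/existsP => [[k /eqP Hk]].
have H : forall m, iter (m * k.+1) ps (Some i) = Some i.
  elim=> [|m IH]; first by []. by rewrite mulSn iterD IH Hk.
have := @iter_bound (l * k.+1) i; rewrite H => /(_ ltac:(by [])).
by rewrite ltnNge leq_pmulr.
Qed.

Lemma depth_None i : parent i = None -> depth parent i = 0%N.
Proof.
move=> Hp; rewrite /depth; apply: eq_card0 => j; by rewrite inE E_parent Hp.
Qed.

Lemma depth_Some i p : parent i = Some p -> depth parent i = (depth parent p).+1.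
Proof.
move=> Hp; rewrite /depth.
rewrite (@eq_card _ _ [predU1 p & [pred j | E j p]]); last first.
  by move=> j; rewrite !inE E_parent Hp eq_sym.
by rewrite cardU1 inE (negbTE (E_irr p)).
Qed.

Lemma depth_lt i : (depth parent i < l)%N.
Proof.
have H2 := cardD1 i 'I_l; rewrite card_ord inE add1n in H2.
rewrite /depth; apply: (@leq_trans #|[predD1 'I_l & i]|.+1); last by rewrite -H2.
rewrite ltnS.
apply: subset_leq_card; apply/subsetP => j; rewrite !inE => Hj.
rewrite andbT; apply/eqP => Eji; move: Hj; rewrite Eji; apply/negP; exact: E_irr.
Qed.

Lemma parent_neq i p : parent i = Some p -> p != i.
Proof.
move=> Hp; apply/eqP => Epi; have := E_irr i; by rewrite E_parent Hp Epi eqxx.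
Qed.


Lemma sum_eq1 (P : pred 'I_l) j :
  \sum_(c | P c) ((c == j)%:R : rat) = (P j)%:R.
Proof.
rewrite big_mkcond /= (bigD1 j) //= eqxx big1 => [|c /negbTE ->]; last by case: (P c).
by case: (P j); rewrite ?addr0.
Qed.

Lemma bor_natr (a b : bool) : ~~ (a && b) -> ((a || b)%:R : rat) = a%:R + b%:R.
Proof. by case: a; case: b => //= _; rewrite ?addr0 ?add0r. Qed.

Lemma count_children (q : option 'I_l) j :
  \sum_(c | parent c == q) (((c == j)%:R + (E c j)%:R) : rat) =
  (if q is Some o then (E o j)%:R else 1).
Proof.
move: {2}(depth parent j) (leqnn (depth parent j)) => n.
elim: n j => [|n IH] j Hd.
  have Hp : parent j = None.
    case Hp: (parent j) => [p|] //; move: Hd; by rewrite (depth_Some Hp).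
  rewrite big_split /= sum_eq1 big1 => [|c _]; last by rewrite E_parent Hp.
  rewrite Hp addr0; case: q => [o|] //=; by rewrite E_parent Hp.
case Hp: (parent j) => [p|]; last first.
  rewrite big_split /= sum_eq1 big1 => [|c _]; last by rewrite E_parent Hp.
  rewrite Hp addr0; clear IH; case: q => [o|] //=; by rewrite E_parent Hp.
have Hdp : (depth parent p <= n)%N by move: Hd; rewrite (depth_Some Hp).
transitivity (\sum_(c | parent c == q) ((c == j)%:R + (((c == p)%:R + (E c p)%:R) : rat))).
  apply: eq_bigr => c _; rewrite E_parent Hp bor_natr; first by rewrite (eq_sym p).
  by apply/andP => [[/eqP <-]]; apply/negP; apply: E_irr.
rewrite big_split /= sum_eq1 IH // Hp.
clear IH; case: q => [o|]; last by rewrite /= add0r.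
rewrite (E_parent o j) Hp bor_natr; last first.
  by apply/andP => [[/eqP <-]]; apply/negP; apply: E_irr.
done.
Qed.

Lemma sum_delta (f : 'I_l -> rat) c : \sum_j f j * (c == j)%:R = f c.
Proof.
rewrite (bigD1 c) //= eqxx mulr1 big1 ?addr0 // => j Hj.
by rewrite eq_sym (negbTE Hj) mulr0.
Qed.

Lemma sum_cond (P : pred 'I_l) (f : 'I_l -> rat) :
  \sum_(j | P j) f j = \sum_j f j * (P j)%:R.
Proof. rewrite big_mkcond; apply: eq_bigr => j _; by case: (P j); rewrite ?mulr1 ?mulr0. Qed.

Lemma desc_decomp (q : option 'I_l) (f : 'I_l -> rat) :
  \sum_(c | parent c == q) (f c + \sum_(j | E c j) f j) =
  if q is Some o then \sum_(j | E o j) f j else \sum_j f j.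
Proof.
transitivity (\sum_(c | parent c == q) \sum_j f j * ((c == j)%:R + (E c j)%:R)).
  apply: eq_bigr => c _; rewrite (sum_cond (E c)) -sum_delta -big_split /=.
  by apply: eq_bigr => j _; rewrite mulrDr.
rewrite exchange_big /=.
transitivity (\sum_j f j * (if q is Some o then (E o j)%:R else 1)).
  by apply: eq_bigr => j _; rewrite -mulr_sumr count_children.
case: q => [o|]; last by apply: eq_bigr => j _; rewrite mulr1.
by rewrite (sum_cond (E o)).
Qed.

End Tree.



Arguments U1 {l}. Arguments U2 {l}. Arguments U3 {l}. Arguments Rout {l}.

Section Mat.
Variables (l : nat) (parent : 'I_l -> option 'I_l).

Definition encn (v : vtx l) : nat :=
  match v with U1 => 0 | U2 => 1 | U3 => 2 | Rout => 3
  | Ov i => 4 + i | Rin i => 4 + l + i end.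

Lemma encn_lt v : (encn v < nV l)%N.
Proof. rewrite /nV; case: v => //= [i|i]; have := ltn_ord i; lia. Qed.

Definition enc v : 'I_(nV l) := Ordinal (encn_lt v).

Lemma decode_enc v : decode l (enc v) = v.
Proof.
case: v => // i /=.
- have -> : (i.+4 - 4)%N = i by lia.
  case: insubP => [k _ Hk|]; first by congr Ov; apply: val_inj.
  by rewrite ltn_ord.
- have -> : ((l + i).+4 - 4 = l + i)%N by lia.
  case: insubP => [k Hk _|_]; first by move: Hk; rewrite /=; lia.
  have -> : (l + i - l = i)%N by lia.
  case: insubP => [k _ Hk|]; first by congr Rin; apply: val_inj.
  by rewrite ltn_ord.
Qed.

Lemma enc_decode (a : 'I_(nV l)) : enc (decode l a) = a.
Proof.
apply: val_inj; case: a => a Ha /=.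
do 4 (case: a Ha => [|a] Ha; first done).
rewrite /decode.
have -> : (a.+4 - 4)%N = a by lia.
case: insubP => [k _ Hk|Hn] /=; first by rewrite Hk.
have Ha' : (a - l < l)%N by move: Ha Hn; rewrite /nV; lia.
case: insubP => [k _ Hk|] /=; last by rewrite Ha'.
move: Hn; rewrite Hk; lia.
Qed.

Lemma sumV (F : 'I_(nV l) -> rat) :
  \sum_a F a = F (enc U1) + F (enc U2) + F (enc U3) + F (enc Rout)
     + \sum_(i < l) F (enc (Ov i)) + \sum_(i < l) F (enc (Rin i)).
Proof.
rewrite 4!big_ord_recl big_split_ord /= !addrA.
congr (_ + _ + _ + _ + _ + _); try (apply: eq_bigr => i _); congr F; apply: val_inj => //=.
Qed.


Definition veq (u w : vtx l) : bool :=
  match u, w with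
  | U1, U1 | U2, U2 | U3, U3 | Rout, Rout => true
  | Ov i, Ov j => i == j
  | Rin i, Rin j => i == j
  | _, _ => false
  end.

Lemma veq_refl u : veq u u.
Proof. by case: u => //= i; rewrite eqxx. Qed.

Lemma veq_eq u w : veq u w -> u = w.
Proof. by case: u; case: w => //= i j /eqP ->. Qed.

Lemma enc_eq u w : (enc u == enc w) = veq u w.
Proof.
apply/eqP/idP => [H|H]; last by rewrite (veq_eq H).
have : decode l (enc u) = decode l (enc w) by rewrite H.
by rewrite !decode_enc => ->; apply: veq_refl.
Qed.

Definition M (u w : vtx l) : rat :=
  if veq u w then weight parent u else (adj parent u w)%:R.

Lemma A_enc u w : A_Gamma parent (enc u) (enc w) = M u w.
Proof. by rewrite /A_Gamma mxE enc_eq !decode_enc. Qed.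

Lemma col_sum (v : 'rV[rat]_(nV l)) y :
  (v *m A_Gamma parent) 0 (enc y) =
  v 0 (enc U1) * M U1 y + v 0 (enc U2) * M U2 y + v 0 (enc U3) * M U3 y
  + v 0 (enc Rout) * M Rout y + \sum_(i < l) v 0 (enc (Ov i)) * M (Ov i) y
  + \sum_(i < l) v 0 (enc (Rin i)) * M (Rin i) y.
Proof. by rewrite mxE sumV !A_enc; congr (_ + _ + _); apply: eq_bigr => i _; rewrite A_enc. Qed.

End Mat.



Section Col.
Variables (l : nat) (parent : 'I_l -> option 'I_l).
Hypothesis Hac : scheme_acyclic parent.
Variable v : 'rV[rat]_(nV l).
Local Notation w u := (v 0 (enc u)).
Local Notation Av := ((v *m A_Gamma parent) 0).

Lemma big_mul0 (f : 'I_l -> rat) : \sum_(i < l) f i * 0 = 0.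
Proof. by rewrite big1 // => i _; rewrite mulr0. Qed.

Lemma col_U1 : Av (enc U1) = w U1 + w U2 + w U3 + w Rout.
Proof. by rewrite col_sum /M /adj /= !big_mul0 !mulr1 !addr0. Qed.

Lemma col_U2 : Av (enc U2) = w U1 + 2 * w U2.
Proof. by rewrite col_sum /M /adj /= !big_mul0 !mulr1 !mulr0 !addr0 mulrC. Qed.

Lemma col_U3 : Av (enc U3) = w U1 + 2 * w U3.
Proof. by rewrite col_sum /M /adj /= !big_mul0 !mulr1 !mulr0 !addr0 mulrC. Qed.

Lemma col_Rout : Av (enc Rout) = w U1 + weight parent Rout * w Rout
   + \sum_(i | parent i == None) w (Ov i).
Proof.
rewrite col_sum /M /adj /= [X in _ + X]big1 => [|i _] //=; last by rewrite mulr0.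
rewrite (sum_cond (fun i => parent i == None)) !mulr0 !mulr1 !addr0.
rewrite [w Rout * _]mulrC; congr (_ + _); apply: eq_bigr => i _.
by rewrite orbF.
Qed.

Lemma col_Ov o : Av (enc (Ov o)) = w (Rin o) +
   (if parent o is Some p then w (Rin p) else w Rout).
Proof.
rewrite col_sum /M /adj /= [X in _ + X + _]big1 => [|i _]; last by case: (i == o); rewrite /= mulr0.
rewrite !mulr0 !add0r addr0.
case Hp: (parent o) => [p|].
  have Hpo := parent_neq Hac Hp.
  rewrite (eq_bigr (fun i => w (Rin i) * (o == i)%:R + w (Rin i) * (p == i)%:R)).
    by rewrite big_split /= !sum_delta mulr0 add0r addrC.
  move=> i _; rewrite -mulrDr -bor_natr //.
  by apply/andP => [[/eqP <- /eqP E]]; rewrite E eqxx in Hpo.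
rewrite (eq_bigr (fun i => w (Rin i) * (o == i)%:R)).
  by rewrite sum_delta mulr1 addrC.
by move=> i _; rewrite /= orbF.
Qed.

Lemma col_Rin o : Av (enc (Rin o)) = weight parent (Rin o) * w (Rin o) + w (Ov o)
   + \sum_(i | parent i == Some o) w (Ov i).
Proof.
rewrite col_sum /M /adj /= !mulr0 !add0r.
rewrite (eq_bigr (fun i => w (Ov i) * (o == i)%:R + w (Ov i) * (parent i == Some o)%:R)); last first.
  move=> i _; rewrite -mulrDr -bor_natr /=; first by rewrite orbF eq_sym.
  apply/andP => [[/eqP <- /eqP Hp]]; have := parent_neq Hac Hp; by rewrite eqxx.
rewrite big_split /= sum_delta -sum_cond.
rewrite [X in _ + X = _](eq_bigr (fun i => (2 * (chi_Rin parent o)%:~R * w (Rin o)) * (o == i)%:R)).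
  by rewrite (sum_delta (fun=> 2 * (chi_Rin parent o)%:~R * w (Rin o))); ring.
move=> i _; case: (eqVneq i o) => [->|Hne]; first by rewrite ?eqxx mulr1 mulrC.
by rewrite !mulr0.
Qed.

End Col.



Section Unit.
Variables (l : nat) (parent : 'I_l -> option 'I_l).
Hypothesis Hac : scheme_acyclic parent.

Lemma ker0 (v : 'rV[rat]_(nV l)) : v *m A_Gamma parent = 0 -> v = 0.
Proof.
move=> Hv.
have Z y : (v *m A_Gamma parent) 0 (enc y) = 0 by rewrite Hv mxE.
have h1 := Z U1; have h2 := Z U2; have h3 := Z U3.
rewrite col_U1 in h1; rewrite col_U2 in h2; rewrite col_U3 in h3.
have hR : v 0 (enc Rout) = 0 by lra.
have hRin : forall o, v 0 (enc (Rin o)) = 0.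
  move=> o; move: {2}(depth parent o) (leqnn (depth parent o)) => n.
  elim: n o => [|n IH] o Hd; have := Z (Ov o); rewrite (col_Ov Hac).
    case Hp: (parent o) => [p|]; last by rewrite hR addr0.
    by move: Hd; rewrite (depth_Some Hac Hp).
  case Hp: (parent o) => [p|]; last by rewrite hR addr0.
  rewrite (IH p) ?addr0 //; by move: Hd; rewrite (depth_Some Hac Hp).
have hOv : forall o, v 0 (enc (Ov o)) = 0.
  move=> o; move: {2}(l - depth parent o)%N (leqnn (l - depth parent o)%N) => n.
  elim: n o => [|n IH] o Hd.
    by have := depth_lt Hac o; move: Hd; lia.
  have := Z (Rin o); rewrite (col_Rin Hac) hRin mulr0 add0r big1 ?addr0 //.
  move=> i /eqP Hi; apply: IH; move: Hd; rewrite (depth_Some Hac Hi); lia.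
have h4 := Z Rout; rewrite col_Rout hR mulr0 addr0 big1 ?addr0 in h4; last first.
  by move=> i _; rewrite hOv.
apply/rowP => a; rewrite mxE -(enc_decode a).
case: (decode l a) => [| | | |o|o] //; try lra; by rewrite ?hOv ?hRin.
Qed.

Lemma A_unit : A_Gamma parent \in unitmx.
Proof.
rewrite -row_free_unit -kermx_eq0; apply/eqP/row_matrixP => i.
rewrite row0; apply: ker0; by rewrite -row_mul mulmx_ker row0.
Qed.

End Unit.



Lemma card_natr (T : finType) (P : pred T) :
  (#|[pred x | P x]|%:R : rat) = \sum_(x : T) (P x)%:R.
Proof. rewrite -sum1_card natr_sum big_mkcond /=. apply: eq_bigr => x _; by rewrite !inE; case: (P x). Qed.

Lemma sg2 n : ((-1) ^+ n * (-1) ^+ n : rat) = 1.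
Proof. by rewrite -signr_odd mulr_sign; case: (odd n); rewrite ?mulN1r ?opprK ?mulr1. Qed.

Section Sol.
Variables (l : nat) (parent : 'I_l -> option 'I_l) (pos : 'I_l -> bool) (oddt : bool).
Hypothesis Hac : scheme_acyclic parent.
Local Notation E := (encloses parent).

Definition sigm : rat := if oddt then 1 else 0.
Local Notation e := (eps pos).
Definition Asum i := \sum_(j | E j i) e j.
Definition Dsum i := \sum_(j | E i j) e j.
Definition Eall := \sum_i e i.
Definition sg i : rat := (-1) ^+ depth parent i.
Definition rho i := - sigm / 2 + e i + Asum i.

Definition xv (u : vtx l) : rat :=
  match u with
  | U1 => sigm - 2 * Eall | U2 => Eall | U3 => Eall - sigm / 2 | Rout => - sigm / 2
  | Ov i => 2 * sg i * (rho i + Dsum i) | Rin i => - sg i * rho i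
  end.

Definition xsol : 'rV[rat]_(nV l) := \row_a xv (decode l a).

Lemma xrow_enc u : xsol 0 (enc u) = xv u.
Proof. by rewrite mxE decode_enc. Qed.

Lemma sg_root i : parent i = None -> sg i = 1.
Proof. by move=> Hp; rewrite /sg (depth_None Hac Hp). Qed.

Lemma sg_child i p : parent i = Some p -> sg i = - sg p.
Proof. by move=> Hp; rewrite /sg (depth_Some Hac Hp) exprS mulN1r. Qed.

Lemma Asum_root i : parent i = None -> Asum i = 0.
Proof. move=> Hp; rewrite /Asum big1 // => j; by rewrite (E_parent Hac) Hp. Qed.

Lemma Asum_child i p : parent i = Some p -> Asum i = e p + Asum p.
Proof.
move=> Hp; rewrite /Asum !(sum_cond (fun j => E j _)).
rewrite (eq_bigr (fun j => e j * (p == j)%:R + e j * (E j p)%:R)).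
  by rewrite big_split /= sum_delta.
move=> j _; rewrite (E_parent Hac j i) Hp -mulrDr -bor_natr //.
by apply/andP => [[/eqP <-]]; apply/negP; apply: (E_irr Hac).
Qed.

Lemma rho_child i p : parent i = Some p -> rho i = rho p + e i.
Proof. move=> Hp; rewrite /rho (Asum_child Hp); ring. Qed.

Lemma sentry_Ov o : svec_entry parent pos oddt (Ov o) = - sg o * e o.
Proof.
by rewrite /= /par modn2 exprS signr_odd mulN1r mulNr.
Qed.

Lemma sum_constP (P : pred 'I_l) (c : rat) :
  \sum_(i | P i) c = c * #|[pred j | P j]|%:R.
Proof. by rewrite card_natr mulr_sumr sum_cond. Qed.

Lemma sol : xsol *m A_Gamma parent = s_Gamma parent pos oddt.
Proof.
have Hs u : s_Gamma parent pos oddt 0 (enc u) = svec_entry parent pos oddt u.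
  by rewrite mxE decode_enc.
apply/rowP => b; rewrite -(enc_decode b); case: (decode l b) => [| | | |o|o].
- rewrite col_U1 !xrow_enc Hs /=; by field.
- by rewrite col_U2 !xrow_enc Hs /= subrK.
- rewrite col_U3 !xrow_enc Hs /=; by field.
- have HS : \sum_(i | parent i == None) xsol 0 (enc (Ov i)) =
            \sum_(i | parent i == None) (- sigm) + 2 * Eall.
    rewrite /Eall -(desc_decomp Hac None (eps pos)) mulr_sumr -big_split /=.
    apply: eq_bigr => i /eqP Hp.
    by rewrite xrow_enc /= (sg_root Hp) /rho (Asum_root Hp) /Dsum; by field.
  rewrite col_Rout !xrow_enc Hs HS sum_constP /= /chi_R1 intrB /nroots; by field.
- rewrite col_Ov // !xrow_enc Hs sentry_Ov /=.
  case Hp: (parent o) => [p|].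
    rewrite /= xrow_enc /= (sg_child Hp) (rho_child Hp); by field.
  by rewrite /= ?xrow_enc /= (sg_root Hp) /rho (Asum_root Hp); by field.
- have HS : \sum_(i | parent i == Some o) xsol 0 (enc (Ov i)) =
            \sum_(i | parent i == Some o) (- 2 * sg o * rho o) + (- 2 * sg o) * Dsum o.
    rewrite /Dsum -(desc_decomp Hac (Some o) (eps pos)) mulr_sumr -big_split /=.
    apply: eq_bigr => i /eqP Hp.
    by rewrite xrow_enc /= (sg_child Hp) (rho_child Hp) /Dsum; by field.
  rewrite col_Rin // !xrow_enc Hs HS sum_constP /= /chi_Rin intrB /nchildren; by field.
Qed.

End Sol.



Section Fin.
Variables (l : nat) (parent : 'I_l -> option 'I_l) (pos : 'I_l -> bool) (oddt : bool).
Hypothesis Hac : scheme_acyclic parent.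
Local Notation E := (encloses parent).
Local Notation e := (eps pos).

Lemma e2 i : e i * e i = 1.
Proof. by rewrite /eps; case: (pos i); rewrite ?mulr1 ?mulN1r ?opprK. Qed.

Lemma SA_eq : \sum_i e i * Asum parent pos i =
  (Pi_minus parent pos)%:R - (Pi_plus parent pos)%:R.
Proof.
transitivity (\sum_i \sum_j (e i * e j * (E j i)%:R)).
  apply: eq_bigr => i _; rewrite /Asum sum_cond mulr_sumr.
  by apply: eq_bigr => j _; rewrite mulrA.
rewrite pair_big /= /Pi_minus /Pi_plus !card_natr -sumrB.
apply: eq_bigr => [[i j]] _ /=.
by rewrite /eps; case: (E j i); case: (pos i); case: (pos j);
  rewrite /= ?mulr1 ?mulr0 ?mulN1r ?opprK ?subr0 ?sub0r.
Qed.

Lemma SD_eq : \sum_i e i * Dsum parent pos i = \sum_i e i * Asum parent pos i.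
Proof.
transitivity (\sum_i \sum_j (e i * e j * (E i j)%:R)).
  apply: eq_bigr => i _; rewrite /Dsum sum_cond mulr_sumr.
  by apply: eq_bigr => j _; rewrite mulrA.
rewrite exchange_big /=; apply: eq_bigr => i _.
rewrite /Asum sum_cond mulr_sumr; apply: eq_bigr => j _; ring.
Qed.

Lemma Eall_eq : Eall pos = (Lambda_plus pos)%:R - (Lambda_minus pos)%:R.
Proof.
rewrite /Eall /Lambda_plus /Lambda_minus !card_natr -sumrB.
by apply: eq_bigr => i _; rewrite /eps; case: (pos i); rewrite /= ?subr0 ?sub0r.
Qed.

Lemma Delta_eq : Delta parent pos oddt =
  4 * sigm oddt * Eall pos - 4 * l%:R - 8 * \sum_i e i * Asum parent pos i.
Proof.
have Hx : s_Gamma parent pos oddt *m invmx (A_Gamma parent) = xsol parent pos oddt.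
  by rewrite -(sol pos oddt Hac) mulmxK // A_unit.
rewrite /Delta Hx mxE sumV.
have T u : xsol parent pos oddt 0 (enc u) * (s_Gamma parent pos oddt)^T (enc u) 0 =
           xv parent pos oddt u * svec_entry parent pos oddt u.
  by rewrite !mxE !decode_enc.
rewrite !T.
under eq_bigr do rewrite T.
rewrite [X in _ + X](_ : _ = 0); last first.
  by rewrite big1 // => i _; rewrite T /= mulr0.
have HO : \sum_i xv parent pos oddt (Ov i) * svec_entry parent pos oddt (Ov i) =
  \sum_i (sigm oddt * e i + (-2) + (-2) * (e i * Asum parent pos i)
         + (-2) * (e i * Dsum parent pos i)).
  apply: eq_bigr => i _; rewrite sentry_Ov //= /rho.
  transitivity (-2 * ((-1)^+depth parent i * (-1)^+depth parent i) *
     (e i * (- sigm oddt / 2) + e i * e i + e i * Asum parent pos i + e i * Dsum parent pos i)).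
    by rewrite /sg; field.
  by rewrite sg2 e2; field.
rewrite HO !big_split /= -!mulr_sumr sumr_const card_ord SD_eq -mulr_natr /= /Eall.
rewrite /sigm; case: oddt; by field.
Qed.

End Fin.


Theorem proposition1p5 (l : nat) (parent : 'I_l -> option 'I_l)
    (pos : 'I_l -> bool) (oddt : bool) :
  scheme_acyclic parent ->
  (oddt ->
     Delta parent pos oddt =
     - 4 * ((l%:R : rat) + 2 * ((Pi_minus parent pos)%:R - (Pi_plus parent pos)%:R)
            + ((Lambda_minus pos)%:R - (Lambda_plus pos)%:R))) /\
  (~~ oddt ->
     Delta parent pos oddt =
     - 4 * ((l%:R : rat) + 2 * ((Pi_minus parent pos)%:R - (Pi_plus parent pos)%:R))).
Proof.
move=> Hac; split => Ho; rewrite (Delta_eq pos oddt Hac) SA_eq Eall_eq /sigm.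
  by rewrite Ho; ring.
by rewrite (negbTE Ho); ring.
Qed.
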